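(* Let $\mathfrak{X}=\mathfrak{X}_{(\Gamma_q,i_q)_q}$ be a Bourgain–Delbaen space, let $\Gamma'$ be a self-determined subset of $\Gamma$, and let $\mathfrak{X}'=\mathfrak{X}_{(\Gamma'_{q_s},i'_{q_s})_s}$ be the Bourgain–Delbaen space determined by $\Gamma'$ (as described in the context). Let $\gamma\in\Gamma'$ and assume there are a finite subset $F\subseteq\Gamma'$, scalars $(\lambda_\eta)_{\eta\in F}$ and intervals $(E_\eta)_{\eta\in F}$ of $\mathbb{N}$ such that $c_\gamma^*=\sum_{\eta\in F}\lambda_\eta e_\eta^*\circ P_{E_\eta}$ on $\mathfrak{X}$. Then, on $\mathfrak{X}'$, $c_\gamma^{\prime*}=\sum_{\eta\in F}\lambda_\eta e_\eta^*\circ P'_{E'_\eta}$, where for $\eta\in F$, $E'_\eta=\{s:q_s\in E_\eta\}$.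
   Context: Bourgain–Delbaen spaces: given a strictly increasing sequence $(\Gamma_q)_q$ of non-empty finite sets with union $\Gamma$ and linear extension operators $i_q:\ell_\infty(\Gamma_q)\to\ell_\infty(\Gamma)$ ($i_q(x)|_{\Gamma_q}=x$) with $\sup_q\|i_q\|<\infty$ that are compatible (for $p<q$, $i_p=i_q\circ r_q\circ i_p$, with $r_q$ restriction onto $\Gamma_q$), set $\Delta_1=\Gamma_1$, $\Delta_{q+1}=\Gamma_{q+1}\setminus\Gamma_q$, $d_\gamma=i_q(e_\gamma)$ for $\gamma\in\Delta_q$; $\mathfrak{X}_{(\Gamma_q,i_q)_q}$ is the closed span of $\{d_\gamma\}$ in $\ell_\infty(\Gamma)$, with FDD $M_q=\langle d_\gamma:\gamma\in\Delta_q\rangle$ and associated projections $P_E$ onto $\bigoplus_{q\in E}M_q$. $e_\gamma^*$ denotes evaluation at $\gamma$ restricted to the space, $(d_\gamma^* )$ the functionals biorthogonal to $(d_\gamma)$, and $c_\gamma^*=e_\gamma^*-d_\gamma^*$. An infinite $\Gamma'\subseteq\Gamma$ is self-determined if each $d_\gamma^*$, $\gamma\in\Gamma'$, lies in the span of $\{e_\eta^*:\eta\in\Gamma'\}$. For such $\Gamma'$: $\{q:\Gamma'\cap\Delta_q\neq\varnothing\}=\{q_0<q_1<\cdots\}$ (indices $s=0,1,2,\dots$), $\Gamma'_q=\Gamma'\cap\Gamma_q$, $R$ = restriction onto $\Gamma'$, $i'_{q_s}(x)=R(i_{q_s}(x))$ for $x\in\ell_\infty(\Gamma'_{q_s})$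 (extended by zero); $(\Gamma'_{q_s},i'_{q_s})_s$ defines the Bourgain–Delbaen space $\mathfrak{X}'$ with basis vectors $d'_\gamma$ ($\gamma\in\Gamma'$), biorthogonal functionals $d_\gamma^{\prime*}$, $c_\gamma^{\prime*}=e_\gamma^*-d_\gamma^{\prime*}$, FDD $M'_s=\langle d'_\gamma:\gamma\in\Gamma'\cap\Delta_{q_s}\rangle$ and associated projections $P'_{E'}$ onto $\bigoplus_{s\in E'}M'_s$. *)

(* Defs.v *)
From HB Require Import structures.
From mathcomp Require Import all_boot all_order all_algebra.
From mathcomp Require Import finmap.
From mathcomp Require Import all_classical all_reals all_analysis.
Set Implicit Arguments. Unset Strict Implicit. Unset Printing Implicit Defensive.
Import Order.TTheory GRing.Theory Num.Theory.
Local Open Scope ring_scope.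

Section BD.
Variables (R : realType) (G : choiceType).

(* Vectors of l_oo(Gamma) are modelled as functions G -> R; an element of
   l_oo(Gamma_q) is a function vanishing off Gamma_q. *)
Definition restr (A : {fset G}) (x : G -> R) : G -> R :=
  fun t => if t \in A then x t else 0.

Definition restrp (P : pred G) (x : G -> R) : G -> R :=
  fun t => if P t then x t else 0.

Definition unitv (g : G) : G -> R := fun t => if t == g then 1 else 0.

Definition supnorm_on (A : {fset G}) (x : G -> R) : R :=
  \big[Num.max/0]_(t <- A) `|x t|.

(* (Gq, iq) is a Bourgain-Delbaen system; indices q start at 0 here. *)
Definition BD_system (Gq : nat -> {fset G})
    (iq : nat -> (G -> R) -> (G -> R)) : Prop :=
  [/\ Gq 0%N != fset0,
      (forall q, fproper (Gq q) (Gq q.+1)),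
      (forall g, exists q, g \in Gq q) &
      (forall q (c : R) x y,
         iq q (fun t => c * x t + y t) = (fun t => c * iq q x t + iq q y t))] /\
  [/\ (forall q x, iq q x = iq q (restr (Gq q) x)),
      (forall q x g, g \in Gq q -> iq q x g = x g),
      (exists C : R, forall q x g, `|iq q x g| <= C * supnorm_on (Gq q) x)
    & (forall p q x, (p < q)%N -> iq p x = iq q (restr (Gq q) (iq p x)))].

Variables (Gq : nat -> {fset G}) (iq : nat -> (G -> R) -> (G -> R)).

Definition Delta (q : nat) : {fset G} :=
  if q is q'.+1 then (Gq q'.+1 `\` Gq q')%fset else Gq 0%N.

(* d_gamma = i_q(e_gamma) for gamma in Delta_q *)
Definition dvec (q : nat) (g : G) : G -> R := iq q (unitv g).

Definition psum (a : G -> R) (N : nat) : G -> R :=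
  fun t => \sum_(q < N) \sum_(g <- Delta q) a g * dvec q g t.

(* x lies in the closed (sup-norm) span of the d_gamma *)
Definition in_X (x : G -> R) : Prop :=
  (exists C : R, forall t, `|x t| <= C) /\
  forall e : R, 0 < e -> exists N b, forall t, `|psum b N t - x t| <= e.

(* a is the coefficient family of x w.r.t. the FDD (M_q): the series
   sum_q sum_{gamma in Delta_q} a_gamma d_gamma converges to x in sup norm.
   Then d_gamma^*(x) = a_gamma. *)
Definition expansion (x a : G -> R) : Prop :=
  forall e : R, 0 < e -> exists N0, forall N, (N0 <= N)%N ->
    forall t, `|psum a N t - x t| <= e.

(* functionals on X, given through a vector x and its FDD coefficients a *)
Definition functional := (G -> R) -> (G -> R) -> R.

Definition estar (g : G) : functional := fun x _ => x g.
Definition dstar (g : G) : functional := fun _ a => a g.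
Definition cstar (g : G) : functional := fun x a => estar g x a - dstar g x a.

(* e_eta^* o P_E, where P_E x = sum_{q in E} sum_{gamma in Delta_q} a_gamma d_gamma *)
Definition eP_star (h : G) (E : pred nat) : functional := fun _ a =>
  limn (fun N => \sum_(q < N | E q) \sum_(g <- Delta q) a g * dvec q g h).

Definition eq_on_X (f h : functional) : Prop :=
  forall x a, in_X x -> expansion x a -> f x a = h x a.

End BD.

Definition nat_interval (E : pred nat) : Prop :=
  forall a b c, (a <= b <= c)%N -> E a -> E c -> E b.

Definition self_determined (R : realType) (G : choiceType)
    (Gq : nat -> {fset G}) (iq : nat -> (G -> R) -> (G -> R)) (G' : pred G) : Prop :=
  ~ (exists s : seq G, forall g, G' g -> g \in s) /\
  forall g, G' g -> exists (H : {fset G}) (mu : G -> R),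
    {subset H <= G'} /\
    eq_on_X Gq iq (dstar (R:=R) g) (fun x a => \sum_(h <- H) mu h * x h).

Definition enumerates (qs : nat -> nat) (P : nat -> Prop) : Prop :=
  (forall s, (qs s < qs s.+1)%N) /\ (forall q, P q <-> exists s, qs s = q).

Definition Gprime (G : choiceType) (Gq : nat -> {fset G}) (G' : pred G)
    (qs : nat -> nat) (s : nat) : {fset G} :=
  [fset g in Gq (qs s) | G' g]%fset.

Definition iprime (R : realType) (G : choiceType) (Gq : nat -> {fset G})
    (iq : nat -> (G -> R) -> (G -> R)) (G' : pred G) (qs : nat -> nat)
    (s : nat) (x : G -> R) : G -> R :=
  restrp G' (iq (qs s) (restr (Gprime Gq G' qs s) x)).

(* Main.v *)
Require Import Defs.
From HB Require Import structures.
From mathcomp Require Import all_boot all_order all_algebra.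
From mathcomp Require Import finmap.
From mathcomp Require Import all_classical all_reals all_analysis.
From mathcomp Require Import zify.
Import numFieldNormedType.Exports.
Import Order.TTheory GRing.Theory Num.Theory.
Local Open Scope classical_set_scope.
Local Open Scope ring_scope.
Set Implicit Arguments. Unset Strict Implicit.

Section Aux.
Variables (G : choiceType) (Gq : nat -> {fset G}).

Lemma Delta_sub q g : g \in Delta Gq q -> g \in Gq q.
Proof. by case: q => [|q] //=; rewrite in_fsetD => /andP[]. Qed.

Lemma inDelta q g : (g \in Delta Gq q) =
  (g \in Gq q) && (if q is q'.+1 then g \notin Gq q' else true).
Proof. by case: q => [|q] /=; rewrite ?andbT // in_fsetD andbC. Qed.

Hypothesis Hmono : forall q, fproper (Gq q) (Gq q.+1).

Lemma Gq_mono p q : (p <= q)%N -> fsubset (Gq p) (Gq q).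
Proof.
move=> /subnK <-; elim: (q - p)%N => [|k IH]; first exact: fsubset_refl.
by rewrite addSn; apply: fsubset_trans IH (fproper_sub (Hmono _)).
Qed.

Lemma Delta_lvl p q g : g \in Delta Gq p -> (g \in Gq q) = (p <= q)%N.
Proof.
move=> H; case: (leqP p q) => pq.
  by rewrite (fsubsetP (@Gq_mono _ _ pq)) // Delta_sub.
apply/negbTE; case: p H pq => // p; rewrite inDelta => /andP[_ H] pq.
by apply: contra H; apply/fsubsetP; apply: Gq_mono; rewrite -ltnS.
Qed.

Lemma Delta_uniq p q g : g \in Delta Gq p -> g \in Delta Gq q -> p = q.
Proof.
move=> Hp Hq; apply/eqP; rewrite eqn_leq -(@Delta_lvl _ _ _ Hp) -(@Delta_lvl _ _ _ Hq).
by rewrite !Delta_sub.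
Qed.

Lemma Delta_eq p q g : g \in Delta Gq p -> (g \in Delta Gq q) = (p == q).
Proof. by move=> H; apply/idP/eqP => [/(Delta_uniq H)|<-]. Qed.

Lemma Delta_ex g : (exists q, g \in Gq q) -> exists q, g \in Delta Gq q.
Proof.
move=> H; case: (ex_minnP H) => m Hm Hmin; exists m; rewrite inDelta Hm.
by case: m Hm Hmin => // m _ Hmin; apply/negP => /Hmin; rewrite ltnn.
Qed.
End Aux.

Section Sums.
Variable (R : realType).

Lemma sum_ord_stable (F : nat -> R) m n : (m <= n)%N ->
  (forall q, (m <= q)%N -> F q = 0) -> \sum_(q < n) F q = \sum_(q < m) F q.
Proof.
move=> mn H; rewrite -!(big_mkord xpredT) (big_cat_nat (n:=m) (leq0n m) mn) /=.
rewrite [X in _ + X]big1_seq ?addr0 // => q /andP[_].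
by rewrite mem_index_iota => /andP[mq _]; exact: H.
Qed.

Lemma reindex (qs : nat -> nat) (Hinc : forall s, (qs s < qs s.+1)%N)
  (F : nat -> R) : (forall q, (forall s, qs s <> q) -> F q = 0) ->
  forall N, \sum_(q < qs N) F q = \sum_(s < N) F (qs s).
Proof.
move=> H.
have mono : {mono qs : s t / (s <= t)%N}.
  by apply: leq_mono; apply: homo_ltn Hinc; exact: ltn_trans.
have lmono s t : (qs s < qs t)%N = (s < t)%N by rewrite !ltnNge mono.
elim=> [|N IH].
  rewrite big_ord0 big1 // => q _; apply: H => s Hs.
  by have := ltn_ord q; rewrite -Hs ltnNge mono.
rewrite big_ord_recr /= -IH -!(big_mkord xpredT).
rewrite (big_cat_nat (n:=qs N) (leq0n _) (ltnW (Hinc N))) /=; congr (_ + _).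
rewrite big_ltn ?Hinc // big1_seq ?addr0 // => q /andP[_].
rewrite mem_index_iota => /andP[a b]; apply: H => s qsq; subst q.
by move: a b; rewrite !lmono; lia.
Qed.

Lemma cvg_sumseq (I : eqType) (r : seq I) (f : I -> nat -> R) (l : I -> R) :
  (forall i, i \in r -> (f i) @ \oo --> l i) ->
  (fun n => \sum_(i <- r) f i n) @ \oo --> \sum_(i <- r) l i.
Proof.
elim: r => [|i r IH] H.
  under eq_cvg do rewrite big_nil. rewrite big_nil; exact: cvg_cst.
under eq_cvg do rewrite big_cons. rewrite big_cons.
apply: cvgD; first by apply: H; rewrite mem_head.
by apply: IH => j jr; apply: H; rewrite in_cons jr orbT.
Qed.

Lemma near_test (P : nat -> Prop) m : (forall n, (m <= n)%N -> P n) -> \forall n \near \oo, P n.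
Proof. by move=> H; exists m => // n /= hn; apply: H. Qed.
End Sums.

Theorem proposition1p13 (R : realType) (G : choiceType)
    (Gq : nat -> {fset G}) (iq : nat -> (G -> R) -> (G -> R))
    (HBD : BD_system Gq iq)
    (G' : pred G) (Hsd : self_determined Gq iq G')
    (qs : nat -> nat)
    (Hqs : enumerates qs (fun q => exists g, (g \in Delta Gq q) && G' g))
    (g : G) (Hg : G' g)
    (F : {fset G}) (HF : {subset F <= G'})
    (lam : G -> R) (E : G -> pred nat)
    (HE : forall h, h \in F -> nat_interval (E h))
    (Hc : eq_on_X Gq iq (cstar (R:=R) g)
            (fun x a => \sum_(h <- F) lam h * eP_star Gq iq h (E h) x a)) :
  eq_on_X (Gprime Gq G' qs) (iprime Gq iq G' qs) (cstar (R:=R) g)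
    (fun x a => \sum_(h <- F) lam h *
        eP_star (Gprime Gq G' qs) (iprime Gq iq G' qs) h (fun s => E h (qs s)) x a).
Proof.
move: HBD => [[_ Hmono Hcov _] [_ _ [C HC] _]].
have [Hqinc Hqen] := Hqs.
have qmono : {mono qs : s t / (s <= t)%N}.
  by apply: leq_mono; apply: homo_ltn Hqinc; exact: ltn_trans.
have qinj : injective qs := incn_inj qmono.
have qlt s t : (qs s < qs t)%N = (s < t)%N by rewrite !ltnNge qmono.
have range q γ : γ \in Delta Gq q -> G' γ -> exists s, qs s = q.
  by move=> H1 H2; apply/Hqen; exists γ; rewrite H1 H2.
have lvl γ : exists q, γ \in Delta Gq q by apply: Delta_ex.
set Gp := Gprime Gq G' qs. set ip := iprime Gq iq G' qs.
have inGp s γ : (γ \in Gp s) = (γ \in Gq (qs s)) && G' γ by rewrite /Gp /Gprime !inE.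
have Dp s γ : (γ \in Delta Gp s) = (γ \in Delta Gq (qs s)) && G' γ.
  case Gγ: (G' γ); last first.
    by rewrite andbF; apply/negP => /Delta_sub; rewrite inGp Gγ andbF.
  rewrite andbT; have [p Hp] := lvl γ; have [t Ht] := range _ _ Hp Gγ; subst p.
  rewrite (Delta_eq Hmono _ Hp) (inj_eq qinj).
  case: s => [|s]; rewrite inDelta !inGp Gγ !andbT !(Delta_lvl Hmono _ Hp) !qmono; lia.
have dv s γ t : γ \in Delta Gp s -> G' t -> dvec ip s γ t = dvec iq (qs s) γ t.
  move=> Hγ Gt; rewrite /dvec /ip /iprime /restrp Gt; congr (iq _ _ t).
  apply: funext => u; rewrite /restr /unitv; case: ifP => // /negbT uin.
  case: eqP => // eu; subst u.
  by rewrite (Delta_sub Hγ) in uin.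
move=> x a _ Hexp.
rewrite /cstar /estar /dstar /eP_star.
pose f' (t : G) (s : nat) := \sum_(γ <- Delta Gp s) a γ * dvec ip s γ t.
pose P' (N : nat) (t : G) := \sum_(s < N) f' t s.
pose S h N := \sum_(s < N | E h (qs s)) f' h s.
suff -> : x g - a g = \sum_(h <- F) lam h * limn (S h) by [].
have cP t : (fun N => P' N t) @ \oo --> x t.
  apply/cvgrPdist_le => e e0; have [N0 HN0] := Hexp e e0.
  by exists N0 => // n /= hn; rewrite distrC; exact: HN0.
have [p0 Hp0] := lvl g; have [s0 Hs0] := range _ _ Hp0 Hg; subst p0.
have KE N : (s0 < N)%N -> P' N g - a g = \sum_(h <- F) lam h * S h N.
  move=> s0N.
  pose b γ := if G' γ && has (fun q => γ \in Delta Gq q) (iota 0 (qs N)) then a γ else 0.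
  have hasE q γ : γ \in Delta Gq q ->
      has (fun q => γ \in Delta Gq q) (iota 0 (qs N)) = (q < qs N)%N.
    move=> Hq; apply/hasP/idP => [[p]|qN]; last by exists q; rewrite // mem_iota.
    by rewrite mem_iota add0n => /andP[_ pN] /(Delta_uniq Hmono Hq) ->.
  pose F0 t q := \sum_(γ <- Delta Gq q) b γ * dvec iq q γ t.
  have F0out t q : (forall s, qs s <> q) -> F0 t q = 0.
    move=> nq; rewrite /F0 big1_seq // => γ /andP[_ Hγ]; rewrite /b.
    case: ifP => [/andP[Gγ _]|]; last by rewrite mul0r.
    by have [s Hs] := range _ _ Hγ Gγ; case: (nq s).
  have F0big t q : (qs N <= q)%N -> F0 t q = 0.
    move=> Nq; rewrite /F0 big1_seq // => γ /andP[_ Hγ].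
    by rewrite /b (hasE _ _ Hγ) ltnNge Nq andbF mul0r.
  have F0in t s : (s < N)%N -> G' t -> F0 t (qs s) = f' t s.
    move=> sN Gt; rewrite /F0 /f'.
    transitivity (\sum_(γ <- Delta Gq (qs s) | G' γ) a γ * dvec iq (qs s) γ t).
      rewrite [RHS]big_mkcond /=; apply: eq_big_seq => γ Hγ.
      by rewrite /b (hasE _ _ Hγ) qlt sN andbT; case: (G' γ); rewrite ?mul0r.
    symmetry; apply: eq_fbig_cond => [γ|γ Hγ _]; first by rewrite !inE Dp andbT.
    by rewrite dv.
  have psumE n t : psum Gq iq b n t = \sum_(q < n) F0 t q by [].
  have Hexpy : expansion Gq iq (psum Gq iq b (qs N)) b.
    move=> e e0; exists (qs N) => n hn t.
    by rewrite psumE (sum_ord_stable hn (F0big t)) -psumE subrr normr0 ltW.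
  have Hiny : in_X Gq iq (psum Gq iq b (qs N)).
    split; last by move=> e e0; exists (qs N), b => t; rewrite subrr normr0 ltW.
    exists (\sum_(q < qs N) \sum_(γ <- Delta Gq q)
              `|b γ| * `|C * supnorm_on (Gq q) (@unitv R G γ)|) => t.
    rewrite /psum; apply: le_trans (ler_norm_sum _ _ _) _; apply: ler_sum => q _.
    apply: le_trans (ler_norm_sum _ _ _) _; apply: ler_sum => γ _.
    rewrite normrM; apply: ler_wpM2l => //; apply: le_trans (HC _ _ _) _; exact: ler_norm.
  have yg : psum Gq iq b (qs N) g = P' N g.
    rewrite psumE (reindex Hqinc (F0out g)) /P'.
    by apply: eq_bigr => s _; apply: F0in.
  have bg : b g = a g by rewrite /b Hg (hasE _ _ Hp0) qlt s0N.
  have eP h : h \in F -> limn (fun n => \sum_(q < n | E h q)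
      \sum_(γ <- Delta Gq q) b γ * dvec iq q γ h) = S h N.
    move=> hF; apply: lim_near_cst => //; apply: (near_test (m := qs N)) => n hn.
    rewrite big_mkcond /=.
    transitivity (\sum_(q < qs N) (if E h q then F0 h q else 0)).
      apply: (sum_ord_stable (F := fun q => if E h q then F0 h q else 0)) hn _.
      by move=> q hq; rewrite F0big // if_same.
    rewrite (reindex Hqinc (F := fun q => if E h q then F0 h q else 0)); last first.
      by move=> q hq; rewrite F0out // if_same.
    rewrite /S [RHS]big_mkcond /=; apply: eq_bigr => s _; by rewrite (F0in _ _ (ltn_ord s) (HF h hF)).
  have := Hc _ _ Hiny Hexpy; rewrite /cstar /estar /dstar /eP_star yg bg => ->.
  by apply: eq_big_seq => h hF; rewrite eP.
have SE h N : S h N = \sum_(s < N) (if E h (qs s) then f' h s else 0).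
  by rewrite /S big_mkcond.
have cS h : h \in F -> S h @ \oo --> limn (S h).
  move=> hF.
  suff : exists L : R, S h @ \oo --> L by move=> [L HL]; exact: cvgP HL.
  have [[m Hm]|nA] := pselect (exists m, forall s, (m <= s)%N -> ~~ E h (qs s)).
    exists (S h m); apply: cvg_near_cst; apply: (near_test (m := m)) => n hn.
    rewrite !SE; apply: (sum_ord_stable (F := fun s => if E h (qs s) then f' h s else 0)) hn _.
    by move=> s hs; rewrite (negbTE (Hm s hs)).
  have H m : exists s, (m <= s)%N && E h (qs s).
    apply: contrapT => nH; apply: nA; exists m => s ms; apply/negP => Es.
    by apply: nH; exists s; rewrite ms Es.
  have [m0 /andP[_ Em0]] := H 0%N.
  have Eall n : (m0 <= n)%N -> E h (qs n).
    move=> hn; have [c /andP[nc Ec]] := H n.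
    by apply: (HE h hF (qs m0) (qs n) (qs c)) => //; rewrite !qmono hn nc.
  pose c := \sum_(s < m0) (if E h (qs s) then f' h s else 0) - P' m0 h.
  exists (c + x h).
  have Hn : {near \oo, (fun n => c + P' n h) =1 S h}.
    apply: (near_test (m := m0)) => n hn.
    have D (u : nat -> R) : \sum_(s < n) u s = \sum_(s < m0) u s + \sum_(m0 <= s < n) u s.
      by rewrite -!(big_mkord xpredT) (big_cat_nat (leq0n _) hn).
    have T : \sum_(m0 <= s < n) (if E h (qs s) then f' h s else 0) = \sum_(m0 <= s < n) f' h s.
      by apply: eq_big_nat => s /andP[hs _]; rewrite Eall.
    rewrite SE /P' (D (fun s => if E h (qs s) then f' h s else 0)) (D (f' h)) T.
    by rewrite /c /P' addrA subrK.
  apply: cvg_trans (near_eq_cvg Hn) _.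
  exact: (@cvgD _ _ _ _ _ (fun=> c) (fun n => P' n h) _ _ (cvg_cst _) (cP h)).
have cu1 : (fun N => \sum_(h <- F) lam h * S h N) @ \oo --> \sum_(h <- F) lam h * limn (S h).
  by apply: cvg_sumseq => h hF; apply: cvgMr; exact: cS.
have cu2 : (fun N => \sum_(h <- F) lam h * S h N) @ \oo --> x g - a g.
  have Hn : {near \oo, (fun N => P' N g - a g) =1 (fun N => \sum_(h <- F) lam h * S h N)}.
    by apply: (near_test (m := s0.+1)) => n hn; exact: KE.
  apply: cvg_trans (near_eq_cvg Hn) _.
  exact: (@cvgB _ _ _ _ _ (fun n => P' n g) (fun=> a g) _ _ (cP g) (cvg_cst _)).
by rewrite -(cvg_lim _ cu2) // (cvg_lim _ cu1).
Qed.
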